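(* Let $\alpha,\beta,\gamma$ be real constants with $\beta\neq 0$, $\alpha\beta\neq 3$ and $\beta^2\gamma+3\alpha\beta-9=0$. Then for every constant $a_2$, the functions $$q(t)=\pm\frac{\sqrt{9a_2(\alpha\beta-3)^2e^{-\frac{2(\alpha\beta-3)}{\beta}t}-3\beta^2(\alpha\beta-3)e^{-\frac{4(\alpha\beta-3)}{\beta}t}}}{\beta^2e^{-\frac{2(\alpha\beta-3)}{\beta}t}-3a_2(\alpha\beta-3)},\qquad p(t)=(\alpha\beta-3)\frac{q(t)}{\beta}+\frac{\beta}{3}q(t)^3,$$ on any interval where they are defined and real, solve the system $$\dot q=-p,\qquad \dot p=-\gamma q+q^3-(\alpha+\beta q^2)p,$$ so that $q$ solves the force-free Duffing–Van der Pol equation $\ddot q+(\alpha+\beta q^2)\dot q-\gamma q+q^3=0$. These are exactly the solutions on which the first integral $I_2=\big[p-(\alpha\beta-3)\frac{q}{\beta}-\frac{\beta}{3}q^3\big]e^{3t/\beta}$ vanishes (with $q\neq0$). *)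

(* Defs.v *)
From Stdlib Require Import Reals.
Open Scope R_scope.

Definition mAB (alpha beta : R) : R := alpha * beta - 3.

Definition radic (alpha beta a2 t : R) : R :=
  9 * a2 * (mAB alpha beta) ^ 2 * exp (- (2 * mAB alpha beta / beta) * t)
  - 3 * beta ^ 2 * mAB alpha beta * exp (- (4 * mAB alpha beta / beta) * t).

Definition denom (alpha beta a2 t : R) : R :=
  beta ^ 2 * exp (- (2 * mAB alpha beta / beta) * t) - 3 * a2 * mAB alpha beta.

(* q(t) with sign s (s = 1 or s = -1 encodes the +/-) *)
Definition qsol (alpha beta a2 s t : R) : R :=
  s * sqrt (radic alpha beta a2 t) / denom alpha beta a2 t.

Definition psol (alpha beta a2 s t : R) : R :=
  mAB alpha beta * qsol alpha beta a2 s t / beta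
  + beta / 3 * (qsol alpha beta a2 s t) ^ 3.

Definition I2 (alpha beta q p t : R) : R :=
  (p - mAB alpha beta * q / beta - beta / 3 * q ^ 3) * exp (3 * t / beta).

Definition is_open_interval (I : R -> Prop) : Prop :=
  (forall x y z, I x -> I z -> x <= y <= z -> I y) /\
  (forall t, I t -> exists eps, 0 < eps /\ forall s, Rabs (s - t) < eps -> I s).

(* Main.v *)
Require Import Defs.
From Stdlib Require Import Reals Lra Classical.
Open Scope R_scope.
From Stdlib Require Import Ranalysis5.
From Coquelicot Require Import Coquelicot.
Lemma alg (m b a2 s E: R): b<>0 -> s=1\/s=-1 ->
 0 < 9*a2*m^2*E - 3*b^2*m*(E*E) -> b^2*E - 3*a2*m <> 0 ->
 s * ((9*a2*m^2*(-(2*m/b)*1*E) + -(3*b^2*m*(-(4*m/b)*1*(E*E)))) * /(2*sqrt (9*a2*m^2*E - 3*b^2*m*(E*E)))) * /(b^2*E + -(3*a2*m))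
 + s*sqrt (9*a2*m^2*E - 3*b^2*m*(E*E)) * (-(b^2*(-(2*m/b)*1*E)) * /((b^2*E + -(3*a2*m))*(b^2*E+-(3*a2*m))))
 = -(m*(s*sqrt (9*a2*m^2*E - 3*b^2*m*(E*E))/(b^2*E-3*a2*m))/b + b/3*(s*sqrt (9*a2*m^2*E - 3*b^2*m*(E*E))/(b^2*E-3*a2*m))^3).
Proof.
intros hb hs hR hD.
set (R0 := 9*a2*m^2*E - 3*b^2*m*(E*E)) in *.
set (D := b^2*E - 3*a2*m) in *.
assert (HD' : b^2*E + -(3*a2*m) = D) by (unfold D; ring). rewrite HD'.
assert (HS : sqrt R0 * sqrt R0 = R0) by (apply sqrt_sqrt; lra).
assert (Sp : 0 < sqrt R0) by (apply sqrt_lt_R0; lra).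
set (S := sqrt R0) in *.
assert (key: forall X Y, X*S = Y*S -> X = Y).
{ intros X Y H. apply Rmult_eq_reg_r with S; [exact H| lra]. }
apply key.
transitivity (s*((9*a2*m^2*(-(2*m/b)*1*E) + -(3*b^2*m*(-(4*m/b)*1*(E*E))))/2)/D
   - s*(S*S)*(b^2*(-(2*m/b)*1*E))/(D*D)).
{ field; repeat split; try assumption; lra. }
transitivity (-(m*s*(S*S)/(D*b) + b/3*(s*s*s)*((S*S)*(S*S))/(D*D*D))).
2:{ field; repeat split; assumption. }
rewrite HS. unfold R0, D in *. destruct hs; subst s; field; repeat split; assumption.
Qed.
Lemma g_der (q : R->R) t dq c k: is_derive q t dq -> q t <> 0 ->
  is_derive (fun t => (/ (q t ^ 2) + c) * exp (k * t)) t
   ((-2*dq/(q t^3))*exp(k*t) + (/(q t^2) + c)*(k*exp(k*t))).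
Proof.
intros Hq Hn.
assert (H1 : is_derive (fun x => / (x ^ 2) + c) (q t) (-2/(q t^3))).
{ auto_derive. { rewrite Rmult_1_r; apply Rmult_integral_contrapositive; split; exact Hn. } field. exact Hn. }
assert (H2 : is_derive (fun x => / (q x ^ 2) + c) t (dq * (-2/(q t^3)))).
{ exact (is_derive_comp (fun x => / (x ^ 2) + c) q t _ _ H1 Hq). }
assert (H3 : is_derive (fun x => exp (k*x)) t (k*exp(k*t))).
{ auto_derive; auto. ring. }
pose proof (is_derive_mult _ _ t _ _ H2 H3 (fun a b => Rmult_comm a b)) as H4.
simpl in H4. unfold mult, plus in H4; simpl in H4.
replace ((-2*dq/(q t^3))*exp(k*t) + (/(q t^2) + c)*(k*exp(k*t))) with
  (dq * (-2/(q t^3)) * exp (k*t) + (/ (q t ^ 2) + c) * (k * exp (k*t))).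
exact H4. field. exact Hn.
Qed.

Lemma exp4 (m b t : R) : b <> 0 ->
  exp (- (4 * m / b) * t) = exp (- (2 * m / b) * t) * exp (- (2 * m / b) * t).
Proof. intros hb. rewrite <- exp_plus. f_equal. field. exact hb. Qed.

Lemma part1 (alpha beta gamma : R)
  (hb : beta <> 0) (hab : alpha * beta <> 3)
  (hg : beta ^ 2 * gamma + 3 * alpha * beta - 9 = 0) a2 s :
  (s = 1 \/ s = -1) -> forall t : R,
       0 <= radic alpha beta a2 t -> denom alpha beta a2 t <> 0 ->
       derivable_pt_lim (qsol alpha beta a2 s) t (- psol alpha beta a2 s t) /\
       derivable_pt_lim (psol alpha beta a2 s) t
         (- gamma * qsol alpha beta a2 s t + (qsol alpha beta a2 s t) ^ 3
          - (alpha + beta * (qsol alpha beta a2 s t) ^ 2) * psol alpha beta a2 s t).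
Proof.
intros hs t hR hD.
assert (hm : mAB alpha beta <> 0) by (unfold mAB; lra).
assert (hE : 0 < exp (- (2 * mAB alpha beta / beta) * t)) by apply exp_pos.
assert (hR' : 0 < radic alpha beta a2 t).
{ destruct hR as [hR|hR]; [exact hR|exfalso].
  assert (radic alpha beta a2 t = -3 * mAB alpha beta * exp (- (2 * mAB alpha beta / beta) * t) * denom alpha beta a2 t).
  { unfold radic, denom. rewrite exp4 by exact hb. ring. }
  rewrite H in hR. symmetry in hR. apply Rmult_integral in hR. destruct hR as [hR|hR]; [|exact (hD hR)].
  apply Rmult_integral in hR. destruct hR as [hR|hR]; [|lra].
  apply Rmult_integral in hR. destruct hR as [hR|hR]; [lra|exact (hm hR)]. }
assert (Hq : derivable_pt_lim (qsol alpha beta a2 s) t (- psol alpha beta a2 s t)).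
{ apply is_derive_Reals. unfold radic, denom in hR', hD.
  unfold qsol, psol, radic, denom.
  auto_derive.
  { rewrite exp4 in * by exact hb. split; [exact hR'|split; [exact hD|exact I]]. }
  rewrite exp4 in * by exact hb.
  unfold qsol, radic, denom. rewrite exp4 by exact hb.
  apply (alg (mAB alpha beta) beta a2 s (exp (- (2 * mAB alpha beta / beta) * t))); assumption. }
split; [exact Hq|].
set (f2 := fun x => mAB alpha beta * x / beta + beta / 3 * x ^ 3).
assert (Hf2 : derivable_pt_lim f2 (qsol alpha beta a2 s t)
   (mAB alpha beta / beta + beta * (qsol alpha beta a2 s t)^2)).
{ apply is_derive_Reals. unfold f2. auto_derive; auto. field. exact hb. }
pose proof (derivable_pt_lim_comp _ _ _ _ _ Hq Hf2) as Hc.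
assert (Heq : gamma = (9 - 3 * alpha * beta) / beta ^ 2).
{ apply Rmult_eq_reg_l with (beta ^ 2). field_simplify; [lra|exact hb]. apply pow_nonzero; exact hb. }
replace (- gamma * qsol alpha beta a2 s t + qsol alpha beta a2 s t ^ 3 -
   (alpha + beta * qsol alpha beta a2 s t ^ 2) * psol alpha beta a2 s t)
 with ((mAB alpha beta / beta + beta * qsol alpha beta a2 s t ^ 2) * - psol alpha beta a2 s t).
- exact Hc.
- rewrite Heq. unfold psol, mAB. field. exact hb.
Qed.
Lemma sign_const (J : R -> Prop) (f : R -> R) t0 t :
  is_open_interval J -> (forall x, J x -> continuity_pt f x) ->
  (forall x, J x -> f x <> 0) -> J t0 -> J t -> f t0 < 0 -> f t < 0.
Proof.
intros [HJc _] Hc Hn H0 Ht Hf0.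
destruct (Rlt_or_le (f t) 0) as [h|h]; [exact h|exfalso].
assert (hpos : 0 < f t) by (destruct h; [lra| exfalso; apply (Hn t Ht); auto]).
destruct (Rtotal_order t0 t) as [lt|[eq|gt]].
- destruct (IVT_interv f t0 t) as [z [hz1 hz2]]; auto.
  { intros a ha. apply Hc. apply (HJc t0 a t); auto. }
  apply (Hn z); auto. apply (HJc t0 z t); auto.
- subst; lra.
- destruct (IVT_interv (fun x => - f x) t t0) as [z [hz1 hz2]]; auto; try lra.
  { intros a ha. apply continuity_pt_opp. apply Hc. apply (HJc t a t0); auto. }
  apply (Hn z); [apply (HJc t z t0); auto|lra].
Qed.

Lemma const_on (J : R -> Prop) (g : R -> R) t0 t :
  is_open_interval J -> (forall x, J x -> derivable_pt_lim g x 0) ->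
  J t0 -> J t -> g t = g t0.
Proof.
intros [HJc _] Hd H0 Ht.
destruct (Rtotal_order t0 t) as [lt|[eq|gt]].
- destruct (MVT_cor2 g (fun _ => 0) t0 t lt) as [c [hc _]].
  { intros c hc. apply Hd. apply (HJc t0 c t); auto. }
  lra.
- subst; reflexivity.
- destruct (MVT_cor2 g (fun _ => 0) t t0 gt) as [c [hc _]].
  { intros c hc. apply Hd. apply (HJc t c t0); auto. }
  lra.
Qed.

Lemma part2 (alpha beta gamma : R)
  (hb : beta <> 0) (hab : alpha * beta <> 3) :
  (forall (J : R -> Prop) (q p : R -> R),
     is_open_interval J ->
     (forall t, J t -> derivable_pt_lim q t (- p t)) ->
     (forall t, J t -> derivable_pt_lim p t
                         (- gamma * q t + (q t) ^ 3 - (alpha + beta * (q t) ^ 2) * p t)) ->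
     (forall t, J t -> q t <> 0) ->
     (forall t, J t -> I2 alpha beta (q t) (p t) t = 0) ->
     exists a2 s, (s = 1 \/ s = -1) /\
       forall t, J t ->
         0 <= radic alpha beta a2 t /\ denom alpha beta a2 t <> 0 /\
         q t = qsol alpha beta a2 s t /\ p t = psol alpha beta a2 s t).
Proof.
intros J q p HJ Hq Hp Hq0 HI.
set (m := mAB alpha beta).
assert (hm : m <> 0) by (unfold m, mAB; lra).
assert (Hpe : forall t, J t -> p t = m * q t / beta + beta / 3 * q t ^ 3).
{ intros t Jt. specialize (HI t Jt). unfold I2 in HI. fold m in HI.
  apply Rmult_integral in HI. destruct HI as [HI|HI].
  - lra.
  - pose proof (exp_pos (3 * t / beta)). lra. }
destruct (classic (exists t0, J t0)) as [[t0 Jt0]|Hne].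
2:{ exists 0, 1. split; [left; reflexivity|]. intros t Jt. exfalso. apply Hne. exists t. exact Jt. }
set (g := fun t => (/ (q t ^ 2) + beta ^ 2 / (3 * m)) * exp (- (2 * m / beta) * t)).
assert (Hg : forall t, J t -> g t = g t0).
{ intros t Jt. apply (const_on J g t0 t HJ); auto.
  intros x Jx. apply is_derive_Reals.
  pose proof (g_der q x (- p x) (beta ^ 2 / (3 * m)) (- (2 * m / beta))) as H.
  assert (E : (-2 * - p x / q x ^ 3 * exp (- (2 * m / beta) * x) +
      (/ q x ^ 2 + beta ^ 2 / (3 * m)) * (- (2 * m / beta) * exp (- (2 * m / beta) * x))) = 0).
  { rewrite (Hpe x Jx). field. repeat split; auto. }
  rewrite E in H. apply H; auto. apply is_derive_Reals. auto. }
set (s := if Rlt_dec 0 (- m * q t0) then 1 else -1).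
assert (Hs : s = 1 \/ s = -1) by (unfold s; destruct Rlt_dec; auto).
assert (Hs0 : s * m * q t0 < 0).
{ unfold s. destruct Rlt_dec as [h|h].
  - lra.
  - assert (- m * q t0 <> 0) by (apply Rmult_integral_contrapositive; split; auto; lra). lra. }
assert (Hsign : forall t, J t -> s * m * q t < 0).
{ intros t Jt. apply (sign_const J (fun x => s * m * q x) t0 t HJ); auto.
  - intros x Jx. apply continuity_pt_mult. apply continuity_pt_const. intros a b; auto.
    apply derivable_continuous_pt. exists (- p x). apply Hq; auto.
  - intros x Jx. apply Rmult_integral_contrapositive; split; auto.
    apply Rmult_integral_contrapositive; split; auto. destruct Hs; subst; lra. }
exists (g t0), s. split; [exact Hs|]. intros t Jt.
specialize (Hg t Jt). specialize (Hsign t Jt). pose proof (Hq0 t Jt) as hq.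
assert (hE : 0 < exp (- (2 * m / beta) * t)) by apply exp_pos.
set (E := exp (- (2 * m / beta) * t)) in *.
assert (HD : denom alpha beta (g t0) t = -3 * m * E / q t ^ 2).
{ unfold denom. fold m. fold E. rewrite <- Hg. unfold g. fold E. field. split; auto. }
set (x := -3 * s * m * E / q t).
assert (hq2 : 0 < q t ^ 2).
{ destruct (Rlt_or_le 0 (q t)) as [h|h]; [nra|]. destruct h as [h|h]; [nra|exfalso; auto]. }
assert (hx : 0 <= x).
{ unfold x. replace (-3 * s * m * E / q t) with (-3 * E * (s * m * q t) / (q t ^ 2)) by (field; auto).
  apply Rmult_le_pos. { nra. } left. apply Rinv_0_lt_compat. exact hq2. }
assert (HR : radic alpha beta (g t0) t = x ^ 2).
{ unfold radic. fold m. rewrite exp4 by exact hb. fold E. rewrite <- Hg. unfold g. fold E. unfold x.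
  destruct Hs as [Hs1|Hs1]; rewrite Hs1; field; auto. }
assert (Hqs : q t = qsol alpha beta (g t0) s t).
{ unfold qsol. rewrite HR, sqrt_pow2 by exact hx. rewrite HD. unfold x.
  destruct Hs as [Hs1|Hs1]; rewrite Hs1; field; repeat split; auto; lra. }
split; [rewrite HR; apply pow2_ge_0|].
split; [rewrite HD; unfold Rdiv; apply Rmult_integral_contrapositive; split;
  [apply Rmult_integral_contrapositive; split; [apply Rmult_integral_contrapositive; split; [lra|auto]|lra]
  |apply Rinv_neq_0_compat; lra]|].
split; [exact Hqs|].
unfold psol. rewrite <- Hqs. rewrite (Hpe t Jt). reflexivity.
Qed.

Theorem mainTheorem6 (alpha beta gamma : R)
  (hb : beta <> 0) (hab : alpha * beta <> 3)
  (hg : beta ^ 2 * gamma + 3 * alpha * beta - 9 = 0) :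
  (* (1) the explicit functions solve the system wherever defined and real *)
  (forall (a2 s : R), (s = 1 \/ s = -1) ->
     forall t : R,
       0 <= radic alpha beta a2 t -> denom alpha beta a2 t <> 0 ->
       derivable_pt_lim (qsol alpha beta a2 s) t (- psol alpha beta a2 s t) /\
       derivable_pt_lim (psol alpha beta a2 s) t
         (- gamma * qsol alpha beta a2 s t + (qsol alpha beta a2 s t) ^ 3
          - (alpha + beta * (qsol alpha beta a2 s t) ^ 2) * psol alpha beta a2 s t))
  /\
  (* (2) these are exactly the solutions with I_2 = 0 and q <> 0 *)
  (forall (J : R -> Prop) (q p : R -> R),
     is_open_interval J ->
     (forall t, J t -> derivable_pt_lim q t (- p t)) ->
     (forall t, J t -> derivable_pt_lim p t
                         (- gamma * q t + (q t) ^ 3 - (alpha + beta * (q t) ^ 2) * p t)) ->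
     (forall t, J t -> q t <> 0) ->
     (forall t, J t -> I2 alpha beta (q t) (p t) t = 0) ->
     exists a2 s, (s = 1 \/ s = -1) /\
       forall t, J t ->
         0 <= radic alpha beta a2 t /\ denom alpha beta a2 t <> 0 /\
         q t = qsol alpha beta a2 s t /\ p t = psol alpha beta a2 s t).
Proof.
  intros. split. { intros a2 s hs t hR hD. apply (part1 alpha beta gamma); assumption. }
  apply (part2 alpha beta gamma); assumption.
Qed.
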